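(* Let $m$ and $n$ be non-negative integers and let $G$ be a soluble group having exactly $m$ subgroups that are not nilpotent of class at most $n$. If $d$ is the derived length of $G$, then $d \leq [\log_2(n)]+m+1$.
   Context: $[x]$ denotes the integer part of $x$. A subgroup is ''not nilpotent of class at most $n$'' if it is either non-nilpotent or nilpotent of class greater than $n$. *)

(* Defs.v *)
(* Groups here are ARBITRARY (possibly infinite) groups, given by a carrier
   type with multiplication, inverse and identity satisfying the group axioms.
   Subsets/subgroups are predicates T -> Prop, compared extensionally. *)
From mathcomp Require Import all_boot.

Set Implicit Arguments.
Unset Strict Implicit.
Unset Printing Implicit Defensive.

Section GroupDefs.
Variables (T : Type) (mul : T -> T -> T) (inv : T -> T) (one : T).

Definition is_group : Prop :=
  [/\ forall x y z, mul x (mul y z) = mul (mul x y) z,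
      forall x, mul one x = x,
      forall x, mul x one = x,
      forall x, mul (inv x) x = one
    & forall x, mul x (inv x) = one].

Definition is_subgroup (H : T -> Prop) : Prop :=
  [/\ H one,
      forall x y, H x -> H y -> H (mul x y)
    & forall x, H x -> H (inv x)].

Definition gen (A : T -> Prop) : T -> Prop :=
  fun x => forall S, is_subgroup S -> (forall a, A a -> S a) -> S x.

Definition commg (x y : T) : T := mul (mul (inv x) (inv y)) (mul x y).

Definition comm_sub (A B : T -> Prop) : T -> Prop :=
  gen (fun z => exists a b, A a /\ B b /\ z = commg a b).

(* lower central series: lcs H 0 = H = gamma_1(H), lcs H k = gamma_{k+1}(H) *)
Fixpoint lcs (H : T -> Prop) (k : nat) : T -> Prop :=
  match k with
  | 0 => H
  | k'.+1 => comm_sub (lcs H k') H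
  end.

Fixpoint der (H : T -> Prop) (k : nat) : T -> Prop :=
  match k with
  | 0 => H
  | k'.+1 => let D := der H k' in comm_sub D D
  end.

Definition trivial_set (A : T -> Prop) : Prop := forall x, A x -> x = one.

Definition nilpotent_class_le (H : T -> Prop) (n : nat) : Prop :=
  trivial_set (lcs H n).

Definition whole : T -> Prop := fun _ => True.

Definition soluble : Prop := exists d, trivial_set (der whole d).

Definition derived_length (d : nat) : Prop :=
  trivial_set (der whole d) /\
  forall k, trivial_set (der whole k) -> d <= k.

Definition set_eq (A B : T -> Prop) : Prop := forall x, A x <-> B x.

(* the group has exactly m subgroups satisfying P (subgroups counted as
   subsets, i.e. up to extensional equality) *)
Definition exactly_subgroups (P : (T -> Prop) -> Prop) (m : nat) : Prop :=
  exists s : seq (T -> Prop),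
    [/\ size s = m,
        forall i, i < m -> is_subgroup (nth (fun _ => False) s i)
                          /\ P (nth (fun _ => False) s i),
        forall i j, i < j -> j < m ->
          ~ set_eq (nth (fun _ => False) s i) (nth (fun _ => False) s j)
      & forall H, is_subgroup H -> P H ->
          exists2 i, i < m & set_eq H (nth (fun _ => False) s i)].

Definition not_nil_class_le (n : nat) (H : T -> Prop) : Prop :=
  ~ nilpotent_class_le H n.

End GroupDefs.

(* Main.v *)
Require Import Defs.
From mathcomp Require Import all_boot zify.
From Stdlib Require Import FunctionalExtensionality PropExtensionality ClassicalEpsilon.

Set Implicit Arguments.
Unset Strict Implicit.
Unset Printing Implicit Defensive.

Section G.
Variables (T : Type) (mul : T -> T -> T) (inv : T -> T) (one : T).
Hypothesis Hg : is_group mul inv one.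

Lemma mA x y z : mul x (mul y z) = mul (mul x y) z. Proof. by case: Hg. Qed.
Lemma m1l x : mul one x = x. Proof. by case: Hg. Qed.
Lemma m1r x : mul x one = x. Proof. by case: Hg. Qed.
Lemma mVl x : mul (inv x) x = one. Proof. by case: Hg. Qed.
Lemma mVr x : mul x (inv x) = one. Proof. by case: Hg. Qed.
Lemma KL x w : mul (inv x) (mul x w) = w. Proof. by rewrite mA mVl m1l. Qed.
Lemma KR x w : mul x (mul (inv x) w) = w. Proof. by rewrite mA mVr m1l. Qed.
Lemma inv_uniq a b : mul a b = one -> a = inv b.
Proof. move=> h; by rewrite -[a]m1r -(mVr b) mA h m1l. Qed.
Lemma invK x : inv (inv x) = x.
Proof. by symmetry; apply: inv_uniq; rewrite mVr. Qed.
Lemma invM x y : inv (mul x y) = mul (inv y) (inv x).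
Proof. symmetry; apply: inv_uniq. by rewrite -mA KL mVl. Qed.
Lemma inv1 : inv one = one.
Proof. symmetry; apply: inv_uniq; by rewrite m1l. Qed.

Definition conj (w g : T) := mul (inv g) (mul w g).

Ltac gsimp := rewrite /Defs.commg /conj;
  repeat progress rewrite ?invM ?invK ?inv1 ?m1l ?m1r -?mA ?KL ?KR ?mVl ?mVr.

Lemma hall_witt x y z :
  mul (conj (Defs.commg mul inv (Defs.commg mul inv x y) z) (inv y))
   (mul (conj (Defs.commg mul inv (Defs.commg mul inv (inv y) (inv z)) x) z)
        (conj (Defs.commg mul inv (Defs.commg mul inv z (inv x)) (inv y)) x)) = one.
Proof. gsimp. done. Qed.

Notation cm := (Defs.commg mul inv).
Definition sub (A B : T -> Prop) := forall x, A x -> B x.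
Notation subg := (is_subgroup mul inv one).
Notation gn := (gen mul inv one).
Notation cs := (comm_sub mul inv one).

Lemma gen_subgroup A : subg (gn A).
Proof.
split.
- by move=> S [] *.
- by move=> x y hx hy S hS hA; case: (hS) => _ hm _; apply: (hm); [apply: (hx)|apply: (hy)].
- by move=> x hx S hS hA; case: (hS) => _ _ hi; apply: (hi); apply: (hx).
Qed.
Lemma gen_inc A a : A a -> gn A a.
Proof. by move=> ha S _ hA; apply: (hA). Qed.
Lemma gen_min A S : subg S -> sub A S -> sub (gn A) S.
Proof. by move=> hS hA x hx; apply: (hx). Qed.

Lemma cs_gen A B a b : A a -> B b -> cs A B (cm a b).
Proof. move=> ha hb; apply: gen_inc; by exists a, b. Qed.

Lemma cs_mono A A' B B' : sub A A' -> sub B B' -> sub (cs A B) (cs A' B').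
Proof.
move=> hA hB; apply: gen_min; first exact: gen_subgroup.
move=> z [a [b [ha [hb ->]]]]; apply: cs_gen; [exact: hA|exact: hB].
Qed.

Lemma cm_inv a b : inv (cm a b) = cm b a.
Proof. gsimp; done. Qed.

Lemma cs_sym A B : sub (cs A B) (cs B A).
Proof.
apply: gen_min; first exact: gen_subgroup.
move=> z [a [b [ha [hb ->]]]]; rewrite -(invK (cm a b)) cm_inv.
case: (gen_subgroup (fun z => exists a b, B a /\ A b /\ z = cm a b)) => _ _ hi.
by apply: (hi); apply: cs_gen.
Qed.

Lemma cs_in K A B : subg K -> sub A K -> sub B K -> sub (cs A B) K.
Proof.
move=> hK hA hB; apply: gen_min => //; move=> z [a [b [ha [hb ->]]]].
case: hK => _ hm hi; rewrite /Defs.commg.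
by apply: (hm); apply: (hm); try apply: (hi); [apply: (hA)|apply: (hB)|apply: (hA)|apply: (hB)].
Qed.

Definition normal (K N : T -> Prop) := forall w g, N w -> K g -> N (conj w g).

Lemma conj_mul x y g : conj (mul x y) g = mul (conj x g) (conj y g).
Proof. gsimp; done. Qed.
Lemma conj_inv x g : conj (inv x) g = inv (conj x g).
Proof. gsimp; done. Qed.
Lemma conj_one g : conj one g = one.
Proof. gsimp; done. Qed.
Lemma conj_cm a b g : conj (cm a b) g = cm (conj a g) (conj b g).
Proof. gsimp; done. Qed.

Lemma cs_normal K A B : normal K A -> normal K B -> normal K (cs A B).
Proof.
move=> nA nB w g hw hg.
pose P x := forall g, K g -> cs A B (conj x g).
have hP : subg P.
  split.
  - move=> h _; rewrite conj_one; by case: (gen_subgroup (fun z => exists a b, A a /\ B b /\ z = cm a b)).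
  - move=> x y hx hy h hh; rewrite conj_mul.
    case: (gen_subgroup (fun z => exists a b, A a /\ B b /\ z = cm a b)) => _ hm _.
    by apply: (hm); [apply: (hx)|apply: (hy)].
  - move=> x hx h hh; rewrite conj_inv.
    case: (gen_subgroup (fun z => exists a b, A a /\ B b /\ z = cm a b)) => _ _ hi.
    by apply: (hi); apply: (hx).
have : sub (cs A B) P.
  apply: gen_min => // z [a [b [ha [hb ->]]]] h hh.
  rewrite conj_cm; apply: cs_gen; [exact: nA|exact: nB].
by move/(_ w hw g hg).
Qed.

Lemma sub_refl A : sub A A. Proof. by []. Qed.
Lemma sub_trans A B C : sub A B -> sub B C -> sub A C.
Proof. by move=> h1 h2 x /h1 /h2. Qed.

Section K.
Variable K : T -> Prop.
Hypothesis hK : subg K.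

Lemma normal_K : normal K K.
Proof.
move=> w g hw hg; case: hK => _ hm hi; rewrite /conj.
by apply: (hm); [apply: (hi)|apply: (hm)].
Qed.

Lemma lcs_props k : [/\ subg (lcs mul inv one K k), sub (lcs mul inv one K k) K
   & normal K (lcs mul inv one K k)].
Proof.
elim: k => [|k [h1 h2 h3]] /=; first by split=> //; exact: normal_K.
split; first exact: gen_subgroup.
- by apply: cs_in.
- apply: cs_normal => //; exact: normal_K.
Qed.

Lemma lcs_decr k : sub (lcs mul inv one K k.+1) (lcs mul inv one K k).
Proof.
case: (lcs_props k) => h1 h2 h3 /=.
apply: gen_min => // z [a [b [ha [hb ->]]]].
have -> : cm a b = mul (inv a) (conj a b) by gsimp.
case: h1 => _ hm hi; apply: (hm); [by apply: (hi)|by apply: (h3)].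
Qed.

Lemma lcs_le i j : i <= j -> sub (lcs mul inv one K j) (lcs mul inv one K i).
Proof.
move=> /subnK <-; elim: (j - i) => [|t IH]; first exact: sub_refl.
rewrite addSn => x hx; apply: IH; exact: lcs_decr.
Qed.

End K.
Section K2.
Variable K : T -> Prop.
Hypothesis hK : subg K.

Lemma three_elem X Y Z N : sub X K -> sub Y K -> sub Z K -> subg X -> subg Y -> subg Z ->
  subg N -> normal K N ->
  (forall x y z, X x -> Y y -> Z z -> N (cm (cm y z) x)) ->
  (forall x y z, X x -> Y y -> Z z -> N (cm (cm z x) y)) ->
  forall x y z, X x -> Y y -> Z z -> N (cm (cm x y) z).
Proof.
move=> sX sY sZ [_ _ iX] [_ _ iY] [_ _ iZ] [_ mN iN] nN h1 h2 x y z hx hy hz.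
have hw := hall_witt x y z.
set A := cm (cm x y) z in hw *.
set B := conj _ z in hw; set C := conj _ x in hw.
have HB : N B by apply: nN; [apply: h1; auto | auto].
have HC : N C by apply: nN; [apply: h2; auto | auto].
have e := inv_uniq hw.
clearbody A.
have -> : A = conj (conj A (inv y)) y by clear e hw; gsimp.
rewrite e; apply: nN; [apply: iN; exact: mN | auto].
Qed.

Lemma three X Y Z N : sub X K -> sub Y K -> sub Z K -> subg X -> subg Y -> subg Z ->
  subg N -> normal K N ->
  sub (cs (cs Y Z) X) N -> sub (cs (cs Z X) Y) N -> sub (cs (cs X Y) Z) N.
Proof.
move=> sX sY sZ gX gY gZ gN nN H1 H2.
have E := three_elem sX sY sZ gX gY gZ gN nN.
have {E}E : forall x y z, X x -> Y y -> Z z -> N (cm (cm x y) z).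
  apply: E => x y z hx hy hz.
  - by apply: H1; apply: cs_gen => //; apply: cs_gen.
  - by apply: H2; apply: cs_gen => //; apply: cs_gen.
pose P w := K w /\ forall z, Z z -> N (cm w z).
case: (gN) => N1 Nm Ni.
case: (hK) => K1 Km Ki.
have hP : subg P.
  split.
  - split=> // z _; have -> : cm one z = one by gsimp. done.
  - move=> a b [ka ha] [kb hb]; split; first exact: Km.
    move=> z hz; have -> : cm (mul a b) z = mul (conj (cm a z) b) (cm b z) by gsimp.
    apply: Nm; last exact: hb.
    by apply: nN => //; apply: ha.
  - move=> a [ka ha]; split; first exact: Ki.
    move=> z hz; have -> : cm (inv a) z = inv (conj (cm a z) (inv a)) by gsimp.
    by apply: Ni; apply: nN; [apply: ha | apply: Ki].
have sP : sub (cs X Y) P.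
  apply: gen_min => //; move=> w [a [b [ha [hb ->]]]]; split.
  - by apply: (cs_in hK sX sY); apply: cs_gen.
  - by move=> z hz; apply: E.
apply: gen_min => //; move=> w [a [b [ha [hb ->]]]].
by case: (sP _ ha) => _; apply.
Qed.

Notation L := (lcs mul inv one K).

Lemma lcs_comm j i : sub (cs (L i) (L j)) (L (i + j).+1).
Proof.
elim: j i => [|j IH] i; first by rewrite addn0; exact: sub_refl.
suff H : sub (cs (L j.+1) (L i)) (L (i + j.+1).+1) by move=> x /cs_sym /H.
have -> : (i + j.+1).+1 = (i + j).+2 by rewrite addnS.
case: (lcs_props hK j) => gj sj nj.
case: (lcs_props hK i) => gi si ni.
case: (lcs_props hK (i + j).+2) => gN sN nN.
refine (three sj (@sub_refl K) si gj hK gi gN nN _ _).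
-
  have h : sub (cs K (L i)) (L i.+1) by exact: cs_sym.
  move=> x hx; have := IH i.+1 x (cs_mono h (@sub_refl (L j)) hx); by rewrite addSn.
- exact: cs_mono (IH i) (@sub_refl K).
Qed.

Lemma der_lcs k : sub (der mul inv one K k) (L (2 ^ k).-1).
Proof.
elim: k => [|k IH] /=; first exact: sub_refl.
move=> x /(cs_mono IH IH) /lcs_comm.
have -> : ((2 ^ k).-1 + (2 ^ k).-1).+1 = (2 ^ k.+1).-1.
  have := expn_gt0 2 k; rewrite expnS; move: (2 ^ k) => p; lia.
by [].
Qed.

End K2.

Lemma der_subgroup K k : subg K -> subg (der mul inv one K k).
Proof. by case: k => [|k] //= _; exact: gen_subgroup. Qed.

Lemma der_der K j k : der mul inv one (der mul inv one K j) k = der mul inv one K (j + k).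
Proof. elim: k => [|k IH] /=; by rewrite ?addn0 ?addnS /= ?IH. Qed.

Lemma set_eq_eq (A B : T -> Prop) : set_eq A B -> A = B.
Proof.
move=> h; apply: functional_extensionality => x; apply: propositional_extensionality; exact: h.
Qed.

Lemma whole_subg : subg (@whole T).
Proof. by split. Qed.

Lemma main_aux m n d :
  exactly_subgroups mul inv one (not_nil_class_le mul inv one n) m ->
  derived_length mul inv one d ->
  d <= trunc_log 2 n + m + 1.
Proof.
move=> [s [_ _ _ Hs]] [Hd Hmin].
set r := trunc_log 2 n.
have Hlt : n < 2 ^ r.+1 by apply: trunc_log_ltn.
pose W := @whole T.
pose D j := der mul inv one W j.
have nn : forall j, j + r.+1 < d -> not_nil_class_le mul inv one n (D j).
  move=> j hj htr.
  have : trivial_set one (der mul inv one W (j + r.+1)).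
    move=> x hx; apply: htr.
    rewrite -der_der in hx.
    have := der_lcs (der_subgroup j whole_subg) hx.
    apply: lcs_le; first exact: der_subgroup whole_subg.
    by rewrite -ltnS prednK ?expn_gt0.
  move/Hmin; lia.
have dist : forall i j, i < j -> j <= d -> ~ set_eq (D i) (D j).
  move=> i j hij hjd /set_eq_eq e.
  have : trivial_set one (der mul inv one W (i + (d - j))).
    by rewrite -der_der -/(D i) e /D der_der subnKC.
  move/Hmin; lia.
case: (leqP d (r + 1)) => hd; first lia.
set a := d - r.+1.
have F : forall j : 'I_a, {i : 'I_m | set_eq (D j) (nth (fun _ => False) s i)}.
  move=> j; apply: constructive_indefinite_description.
  have hj : j + r.+1 < d by have := ltn_ord j; rewrite /a; lia.
  case: (Hs (D j)).
  - exact: der_subgroup whole_subg.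
  - exact: nn.
  move=> i hi he; by exists (Ordinal hi).
pose g j := proj1_sig (F j).
have ginj : injective g.
  move=> j1 j2 e.
  have h1 := proj2_sig (F j1); have h2 := proj2_sig (F j2).
  rewrite -/(g j1) -/(g j2) e in h1 h2.
  have hs : set_eq (D j1) (D j2).
    by move=> x; split => [/h1 /h2|/h2 /h1].
  apply/val_inj/eqP; apply: contraT => hne.
  have l1 := ltn_ord j1; have l2 := ltn_ord j2.
  case: (ltngtP j1 j2) hne => // hl _.
  - have hd2 : (j2 : nat) <= d by have := ltn_ord j2; rewrite /a; lia.
    by case: (dist _ _ hl hd2 hs).
  - have hd1 : (j1 : nat) <= d by have := ltn_ord j1; rewrite /a; lia.
    by case: (dist _ _ hl hd1) => x; split => /hs.
have := leq_card g ginj; rewrite !card_ord /a; lia.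
Qed.

End G.

Theorem theoremB (m n : nat) (T : Type) (mul : T -> T -> T) (inv : T -> T)
    (one : T) (d : nat) :
  is_group mul inv one ->
  soluble mul inv one ->
  exactly_subgroups mul inv one (not_nil_class_le mul inv one n) m ->
  derived_length mul inv one d ->
  d <= trunc_log 2 n + m + 1.
Proof. move=> Hg _; exact: main_aux. Qed.
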